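(* Let $G$ be a strongly connected directed graph on $n\ge 1$ vertices with nonnegative integer edge weights and radius $R=\min_u\max_v d_G(u,v)$, and let $k$ be a positive integer. Let $G'$ be obtained from $G$ by multiplying every edge weight by $2$ and adding a new vertex $x$ together with edges $(x,u)$ and $(u,x)$ of weight $k$ for every $u\in V(G)$. Then $R\ge k$ if and only if $\sum_{u\in V(G')}\max_{v\in V(G')}d_{G'}(u,v)=2kn+k$.
   Context: $d_G(u,v)$ denotes the shortest-path distance in $G$. *)

(* Defs.v *)
From HB Require Import structures.
From mathcomp Require Import all_boot.
From Stdlib Require Import ClassicalEpsilon.
Set Implicit Arguments. Unset Strict Implicit. Unset Printing Implicit Defensive.

(* A weighted directed graph on a finite vertex type T:
   w u v = Some c  means there is an edge (u,v) of weight c (c : nat, nonnegative);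
   w u v = None    means there is no edge (u,v). *)
Definition wgraph (T : finType) := T -> T -> option nat.

Definition edge (T : finType) (w : wgraph T) : rel T := fun u v => w u v != None.

Definition wt (T : finType) (w : wgraph T) (u v : T) : nat := odflt 0 (w u v).

(* a walk from u to v : the vertex sequence after u *)
Definition is_walk (T : finType) (w : wgraph T) (u v : T) (p : seq T) : bool :=
  path (edge w) u p && (last u p == v).

Definition walk_weight (T : finType) (w : wgraph T) (u : T) (p : seq T) : nat :=
  sumn (pairmap (wt w) u p).

Definition has_walk_of_weight (T : finType) (w : wgraph T) (u v : T) (d : nat) : Prop :=
  exists p, is_walk w u v p /\ walk_weight w u p = d.

Definition hwb (T : finType) (w : wgraph T) (u v : T) : pred nat :=
  fun d => if excluded_middle_informative (has_walk_of_weight w u v d) then true else false.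

Lemma hwb_ex (T : finType) (w : wgraph T) (u v : T) :
  (exists d, has_walk_of_weight w u v d) -> exists d, hwb w u v d.
Proof.
move=> [d Hd]; exists d; rewrite /hwb.
by case: excluded_middle_informative.
Qed.

(* shortest-path distance d_G(u,v): minimum total weight of a walk from u to v
   (0 by convention if v is unreachable from u; irrelevant for strongly
   connected graphs) *)
Definition dist (T : finType) (w : wgraph T) (u v : T) : nat :=
  match excluded_middle_informative (exists d, has_walk_of_weight w u v d) with
  | left H => ex_minn (hwb_ex H)
  | right _ => 0
  end.

Definition strongly_connected (T : finType) (w : wgraph T) : Prop :=
  forall u v : T, connect (edge w) u v.

Definition ecc (T : finType) (w : wgraph T) (u : T) : nat := \max_(v : T) dist w u v.

(* radius min_u max_v d(u,v) (0 for the empty graph) *)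
Definition radius (T : finType) (w : wgraph T) : nat :=
  match [pick u : T] with
  | Some u0 => \big[minn/ecc w u0]_(u : T) ecc w u
  | None => 0
  end.

(* G': double all weights, add new vertex x (= None) joined both ways to
   every old vertex by edges of weight k *)
Definition extend (T : finType) (w : wgraph T) (k : nat) : wgraph (option T) :=
  fun a b => match a, b with
  | Some u, Some v => omap (muln 2) (w u v)
  | None, Some _ => Some k
  | Some _, None => Some k
  | None, None => None
  end.

(* Main.v *)
Require Import Defs.
From HB Require Import structures.
From mathcomp Require Import all_boot.
From Stdlib Require Import ClassicalEpsilon.

Set Implicit Arguments. Unset Strict Implicit. Unset Printing Implicit Defensive.

Lemma sum_opt (T : finType) (F : option T -> nat) :
  \sum_(u : option T) F u = F None + \sum_(v : T) F (Some v).
Proof.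
rewrite (bigD1 None) //=; congr (_ + _).
rewrite (reindex_omap Some id) /=; last by case.
by apply: eq_bigl => v; rewrite eqxx.
Qed.

Lemma bigmin_le (I : finType) (x : nat) (F : I -> nat) (u : I) :
  \big[minn/x]_(i : I) F i <= F u.
Proof.
rewrite unlock; have : u \in index_enum I by rewrite mem_index_enum.
elim: (index_enum I) => //= a s IH; rewrite in_cons => /orP [/eqP <-|/IH H].
  exact: geq_minl.
exact: leq_trans (geq_minr _ _) H.
Qed.

Lemma dist_le (T : finType) (w : wgraph T) u v d :
  has_walk_of_weight w u v d -> dist w u v <= d.
Proof.
move=> H; rewrite /dist; case: excluded_middle_informative => [E|NE].
  case: ex_minnP => m _ Hm; apply: Hm; rewrite /hwb.
  by case: excluded_middle_informative.
by case: NE; exists d.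
Qed.

Lemma dist_walk (T : finType) (w : wgraph T) u v :
  (exists d, has_walk_of_weight w u v d) -> has_walk_of_weight w u v (dist w u v).
Proof.
move=> H; rewrite /dist; case: excluded_middle_informative => [E|//].
case: ex_minnP => m; rewrite /hwb; by case: excluded_middle_informative.
Qed.

Section Ext.
Variables (T : finType) (w : wgraph T) (k : nat).
Local Notation w' := (extend w k).

Lemma edgeSS a b : edge w' (Some a) (Some b) = edge w a b.
Proof. by rewrite /edge /=; case: (w a b). Qed.

Lemma wtSS a b : wt w' (Some a) (Some b) = 2 * wt w a b.
Proof. by rewrite /wt /=; case: (w a b). Qed.

Lemma map_walk a q : path (edge w) a q ->
  path (edge w') (Some a) (map Some q) /\
  walk_weight w' (Some a) (map Some q) = 2 * walk_weight w a q.
Proof.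
elim: q a => [|b q IH] a //= /andP [Hab Hq].
have [H1 H2] := IH b Hq.
rewrite edgeSS Hab H1; split => //.
move: H2; rewrite /walk_weight /= => ->; by rewrite wtSS mulnDr.
Qed.

Lemma unmap a p : path (edge w') (Some a) p -> None \notin p ->
  exists q, p = map Some q /\ path (edge w) a q.
Proof.
elim: p a => [|[b|] p IH] a //=; first by move=> _ _; exists [::].
  rewrite edgeSS in_cons /= => /andP [Hab Hp] Hn.
  have [q [-> Hq]] := IH b Hp Hn.
  by exists (b :: q); rewrite /= Hab Hq.
Qed.

Lemma from_none p v : path (edge w') None p -> last None p = Some v ->
  k <= walk_weight w' None p.
Proof.
case: p => [|[b|] p] //=.
  by move=> _ _; rewrite /walk_weight /= /wt /= leq_addr.
Qed.

Lemma through_none p a v : path (edge w') (Some a) p -> last (Some a) p = Some v ->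
  None \in p -> 2 * k <= walk_weight w' (Some a) p.
Proof.
elim: p a => [|[b|] p IH] a /=; first by [].
  rewrite in_cons /= => /andP [_ Hp] Hl Hn.
  apply: leq_trans (IH b Hp Hl Hn) _.
  by rewrite /walk_weight /= leq_addl.
move=> Hp Hl _.
have := from_none Hp Hl.
rewrite /walk_weight /= /wt /= mul2n -addnn => H.
by rewrite leq_add2l.
Qed.


Lemma dSS_2k u v : dist w' (Some u) (Some v) <= 2 * k.
Proof.
apply: dist_le; exists [:: None; Some v]; split.
  by rewrite /is_walk /= /edge /=.
by rewrite /walk_weight /= /wt /= addn0 mul2n addnn.
Qed.

Lemma dSN u : dist w' (Some u) None <= k.
Proof.
by apply: dist_le; exists [:: None]; split; rewrite /is_walk /walk_weight /= /wt /= ?addn0 ?eqxx //.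
Qed.

Lemma dNN : dist w' None None <= k.
Proof. by apply: (@leq_trans 0) => //; apply: dist_le; exists [::]; split => //; rewrite /is_walk /= eqxx. Qed.

Lemma dNS v : dist w' None (Some v) = k.
Proof.
apply/eqP; rewrite eqn_leq; apply/andP; split.
  by apply: dist_le; exists [:: Some v]; split; rewrite /is_walk /walk_weight /= /wt /= ?addn0 ?eqxx //.
have [p [/andP [Hp /eqP Hl] <-]] : has_walk_of_weight w' None (Some v) (dist w' None (Some v)).
  by apply: dist_walk; exists k; exists [:: Some v]; split; rewrite /is_walk /walk_weight /= /wt /= ?addn0 ?eqxx //.
exact: from_none Hp Hl.
Qed.

Hypothesis sc : strongly_connected w.

Lemma dSS_le u v : dist w' (Some u) (Some v) <= 2 * dist w u v.
Proof.
have [q [/andP [Hq /eqP Hl] Hw]] : has_walk_of_weight w u v (dist w u v).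
  apply: dist_walk; have /connectP [q Hq Hl] := sc u v.
  by exists (walk_weight w u q), q; rewrite /is_walk Hq -Hl eqxx.
apply: dist_le; exists (map Some q); have [H1 H2] := map_walk Hq.
by rewrite /is_walk H1 last_map Hl eqxx H2 Hw.
Qed.

Lemma dSS_ge u v : minn (2 * dist w u v) (2 * k) <= dist w' (Some u) (Some v).
Proof.
have [p [/andP [Hp /eqP Hl] <-]] :
    has_walk_of_weight w' (Some u) (Some v) (dist w' (Some u) (Some v)).
  apply: dist_walk; exists (k + k), [:: None; Some v]; split.
    by rewrite /is_walk /= /edge /=.
  by rewrite /walk_weight /= /wt /= addn0.
case: (boolP (None \in p)) => Hn.
  by apply: leq_trans (geq_minr _ _) (through_none Hp Hl Hn).
have [q [Eq Hq]] := unmap Hp Hn; subst p.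
have [_ ->] := map_walk Hq.
apply: leq_trans (geq_minl _ _) _; rewrite leq_mul2l; apply/orP; right.
apply: dist_le; exists q; split => //; rewrite /is_walk Hq /=.
by move: Hl; rewrite last_map => -[->].
Qed.

Lemma eccS_le u : ecc w' (Some u) <= 2 * k.
Proof.
apply/bigmax_leqP => -[v|] _; first exact: dSS_2k.
by apply: leq_trans (dSN u) _; rewrite mul2n -addnn leq_addl.
Qed.

Hypothesis kpos : 0 < k.
Hypothesis Tne : 0 < #|T|.

Lemma eccN : ecc w' None = k.
Proof.
apply/eqP; rewrite eqn_leq; apply/andP; split.
  by apply/bigmax_leqP => -[v|] _; [rewrite dNS | exact: dNN].
have [v _] : {v : T | true}.
  by case: (pickP T) => [v _|/eq_card0 E]; [exists v|move: Tne; rewrite E].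

have := @leq_bigmax _ (fun x => dist w' None x) (Some v); rewrite /= dNS; exact.
Qed.

Lemma eccS_iff u : (2 * k <= ecc w' (Some u)) = (k <= ecc w u).
Proof.
apply/idP/idP => H.
  have [i0 Ei] := eq_bigmax (fun x => dist w' (Some u) x) (ltac:(by rewrite card_option)).
  move: H; rewrite /ecc Ei; case: i0 {Ei} => [v|] H.
    have := leq_trans H (dSS_le u v); rewrite leq_mul2l /= => Hk.
    by apply: leq_trans Hk (@leq_bigmax _ (fun x => dist w u x) v).
  have := leq_trans H (dSN u); rewrite mul2n -addnn -[X in _ <= X](add0n k) leq_add2r.
  by rewrite leqn0 => /eqP Ek; move: kpos; rewrite Ek.
have [v Ev] := eq_bigmax (fun x => dist w u x) Tne.
apply: leq_trans _ (@leq_bigmax _ (fun x => dist w' (Some u) x) (Some v)).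
apply: leq_trans _ (dSS_ge u v).
by move: H; rewrite /ecc Ev => H; rewrite leq_min leqnn andbT leq_mul2l H orbT.
Qed.

End Ext.

Theorem mainTheorem5 (T : finType) (w : wgraph T) (k : nat) :
  0 < #|T| -> strongly_connected w -> 0 < k ->
  (k <= radius w <->
   \sum_(u : option T) ecc (extend w k) u = 2 * k * #|T| + k).
Proof.
move=> Tne sc kpos.
have Hrad : (k <= radius w) <-> (forall u, k <= ecc w u).
  rewrite /radius; case: pickP => [u0 _|/eq_card0 E]; last by rewrite E in Tne.
  split => [H u|H].
    exact: leq_trans H (bigmin_le _ _ _).
  by apply: (big_ind (fun x => k <= x)) => // x y Hx Hy; rewrite leq_min Hx Hy.
rewrite Hrad sum_opt eccN // addnC.
have Hs : \sum_(v : T) ecc (extend w k) (Some v) +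
          \sum_(v : T) (2 * k - ecc (extend w k) (Some v)) = 2 * k * #|T|.
  rewrite -big_split /= (eq_bigr (fun _ => 2 * k)) => [|v _]; last by rewrite subnKC // eccS_le.
  by rewrite sum_nat_const mulnC.
split => [H|H].
  congr (_ + _); rewrite -Hs; apply/eqP; rewrite -{1}(addn0 (\sum_v _)) eqn_add2l eq_sym.
  rewrite sum_nat_eq0; apply/forallP => v /=; rewrite subn_eq0 eccS_iff //; exact: H.
move=> u; move/eqP: H; rewrite eqn_add2r -Hs -{1}(addn0 (\sum_v _)) eqn_add2l eq_sym.
rewrite sum_nat_eq0 => /forallP /(_ u) /=; rewrite subn_eq0 eccS_iff //.
Qed.
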